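(* Let $G=(V,E)$ be a finite graph, $p_e\in(0,1)$ and $x_e>0$ for each $e\in E$. Let $\Omega=\{0,1\}^E$, $\Sigma\subset\Omega$, $f:\Omega\to2^\Sigma$, $f(\omega)=\Sigma^\uparrow(\omega):=\{\eta\in\Sigma\mid\eta\supset\omega\}$, and $$\rho[\omega]=\mathbb{P}_p[\omega]\ (\omega\in\Omega),\qquad\gamma[\eta]=\mathbb{P}_{\frac{x(1-p)}{1+x(1-p)}}[\eta\mid\Sigma]\propto\prod_{e\in\eta}x_e(1-p_e)\ (\eta\in\Sigma).$$ Let $\mathscr{P}$ be the probability measure on $\Omega\times\Sigma$ with $\mathscr{P}[\omega,\eta]\propto\rho[\omega]\gamma[\eta]\mathbf{1}[\eta\in f(\omega)]$. Then: (a) The marginal on $\Sigma$ satisfies $\mathscr{P}_\Sigma[\eta]\propto\prod_{e\in\eta}x_e$. For each $\omega$ with $\mathscr{P}_\Omega[\omega]\neq0$, $\mathscr{P}[\cdot\mid\omega]=\mathbb{P}_{\frac{x(1-p)}{1+x(1-p)}}[\cdot\mid\Sigma^\uparrow(\omega)]$. (b) The marginal on $\Omega$ is $\mathscr{P}_\Omega=\mathscr{P}_\Sigma\cap\mathbb{P}_p$. For each $\eta\in\Sigma$ with $\mathscr{P}_\Sigma[\eta]\neq0$, $\mathscr{P}[\cdot\mid\eta]=\mathbb{P}_p\cap\delta_\eta=\mathbb{P}_{\eta,p}$.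
   Context: Elements of $\{0,1\}^E$ are identified with subsets of $E$. For $r\in[0,1]^E$, $\mathbb{P}_r$ is Bernoulli percolation (edge $e$ open independently with probability $r_e$); vector operations such as $\frac{x(1-p)}{1+x(1-p)}$ are coordinatewise. $\mathbb{P}_{\eta,p}$ is Bernoulli percolation with parameters $p$ on the edges of $\eta$ with all edges outside $\eta$ closed. $\delta_\eta$ is the Dirac mass at $\eta$. For measures $\pi,\nu$ on $\{0,1\}^E$, $\pi\cap\nu$ is the law of the intersection of the open-edge sets of independent samples of $\pi$ and $\nu$. *)

(* Defs.v *)
From HB Require Import structures.
From mathcomp Require Import all_boot all_order all_algebra.
Set Implicit Arguments. Unset Strict Implicit. Unset Printing Implicit Defensive.
Import Order.TTheory GRing.Theory Num.Theory.
Local Open Scope ring_scope.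

Section Defs.
Variables (R : realFieldType) (E : finType).

(* A (probability) measure on {0,1}^E, identified with {set E}, is given by
   its mass function. *)

Definition bernoulli (r : E -> R) (w : {set E}) : R :=
  \prod_(e : E) (if e \in w then r e else 1 - r e).

Definition condP (mu : {set E} -> R) (S : {set {set E}}) (w : {set E}) : R :=
  (if w \in S then mu w else 0) / \sum_(z in S) mu z.

Definition qpar (x p : E -> R) (e : E) : R :=
  x e * (1 - p e) / (1 + x e * (1 - p e)).

Definition Sigma_up (Sigma : {set {set E}}) (w : {set E}) : {set {set E}} :=
  [set eta in Sigma | w \subset eta].

(* pi \cap nu : law of the intersection of independent samples. *)
Definition meas_cap (pi nu : {set E} -> R) (w : {set E}) : R :=
  \sum_(a : {set E}) \sum_(b : {set E} | a :&: b == w) pi a * nu b.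

Definition dirac (eta : {set E}) (w : {set E}) : R := (w == eta)%:R.

Definition bernoulli_on (eta : {set E}) (p : E -> R) (w : {set E}) : R :=
  if w \subset eta then
    \prod_(e in eta) (if e \in w then p e else 1 - p e)
  else 0.

Definition joint_weight (p x : E -> R) (Sigma : {set {set E}})
    (w eta : {set E}) : R :=
  bernoulli p w * condP (bernoulli (qpar x p)) Sigma eta
  * (eta \in Sigma_up Sigma w)%:R.

Definition scrP (p x : E -> R) (Sigma : {set {set E}}) (w eta : {set E}) : R :=
  joint_weight p x Sigma w eta /
  \sum_(w' : {set E}) \sum_(eta' : {set E}) joint_weight p x Sigma w' eta'.

Definition marg_Omega (p x : E -> R) Sigma (w : {set E}) : R :=
  \sum_(eta : {set E}) scrP p x Sigma w eta.

Definition marg_Sigma (p x : E -> R) Sigma (eta : {set E}) : R :=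
  \sum_(w : {set E}) scrP p x Sigma w eta.

End Defs.

(* Main.v *)
Require Import Defs.
From HB Require Import structures.
From mathcomp Require Import all_boot all_order all_algebra ring lra.
Import Order.TTheory GRing.Theory Num.Theory.
Local Open Scope ring_scope.

Lemma sum_set_prod (R : realFieldType) (E : finType) (G : E -> bool -> R) :
  \sum_(a : {set E}) \prod_(e : E) G e (e \in a) = \prod_(e : E) (G e true + G e false).
Proof.
have -> : \prod_(e : E) (G e true + G e false) = \prod_(e : E) \sum_(c : bool) G e c.
  by apply: eq_bigr => e _; rewrite big_bool.
rewrite bigA_distr_bigA /=.
rewrite (reindex (fun f : {ffun E -> bool} => [set e | f e])) /=.
  by apply: eq_bigr => f _; apply: eq_bigr => e _; rewrite inE.
exists (fun A : {set E} => [ffun e => e \in A]) => [f _ | A _].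
  by apply/ffunP => e; rewrite ffunE inE.
by apply/setP => e; rewrite inE ffunE.
Qed.

Lemma sum_cap_prod (R : realFieldType) (E : finType) (eta w : {set E}) (F : E -> bool -> R) :
  \sum_(b : {set E} | eta :&: b == w) \prod_(e : E) F e (e \in b) =
  if w \subset eta then \prod_(e : E) (if e \in eta then F e (e \in w) else F e true + F e false)
  else 0.
Proof.
case: ifP => Hw; last first.
  by apply: big1 => b /eqP Hb; move: Hw; rewrite -Hb subsetIl.
pose G e c := F e c * (if e \in eta then (c == (e \in w))%:R else 1).
transitivity (\sum_(b : {set E}) \prod_(e : E) G e (e \in b)); last first.
  rewrite sum_set_prod; apply: eq_bigr => e _; rewrite /G.
  by case: (e \in eta); case: (e \in w); rewrite /= ?mulr1 ?mulr0 ?addr0 ?add0r.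
rewrite big_mkcond /=; apply: eq_bigr => b _.
rewrite /G big_split /=.
case: eqP => Hb.
  rewrite [X in _ * X]big1 ?mulr1 // => e _; case He: (e \in eta) => //.
  by rewrite -Hb inE He /= eqxx.
have [e He] : exists e, (e \in eta) && ((e \in b) != (e \in w)).
  apply/existsP; rewrite -[X in is_true X]negbK; apply/negP => /existsPn H.
  apply: Hb; apply/setP => e; move: (H e); rewrite inE.
  case He: (e \in eta) => /=; first by rewrite negbK => /eqP.
  by move=> _; apply/esym/negbTE; apply: contraFN He => /(subsetP Hw).
case/andP: He => He1 He2.
by rewrite [X in _ * X](bigD1 e) //= He1 (negbTE He2) /= mul0r mulr0.
Qed.

Theorem proposition3p5 (R : realFieldType) (E : finType)
    (p x : E -> R) (Sigma : {set {set E}})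
    (hp : forall e, 0 < p e < 1) (hx : forall e, 0 < x e)
    (hSigma : Sigma != set0) :
  (forall eta : {set E},
     marg_Sigma p x Sigma eta =
     (if eta \in Sigma then \prod_(e in eta) x e else 0)
       / \sum_(z in Sigma) \prod_(e in z) x e)
  /\
  (forall w : {set E}, marg_Omega p x Sigma w != 0 ->
     forall eta : {set E},
       scrP p x Sigma w eta / marg_Omega p x Sigma w =
       condP (bernoulli (qpar x p)) (Sigma_up Sigma w) eta)
  /\
  (forall w : {set E},
     marg_Omega p x Sigma w =
     meas_cap (marg_Sigma p x Sigma) (bernoulli p) w)
  /\
  (forall eta : {set E}, eta \in Sigma -> marg_Sigma p x Sigma eta != 0 ->
     forall w : {set E},
       scrP p x Sigma w eta / marg_Sigma p x Sigma eta =
         meas_cap (bernoulli p) (@dirac R E eta) w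
       /\
       meas_cap (bernoulli p) (@dirac R E eta) w = bernoulli_on eta p w).
Proof.
have hp0 e : 0 < p e by case/andP: (hp e).
have hp1 e : 0 < 1 - p e by case/andP: (hp e) => _ h; rewrite subr_gt0.
have ha e : 0 < x e * (1 - p e) by apply: mulr_gt0.
have ha1 e : 1 + x e * (1 - p e) != 0.
  by apply: lt0r_neq0; have := ha e; lra.
set q := qpar x p.
have hq e : 0 < q e < 1.
  rewrite /q /qpar; have := ha e; set a := x e * (1 - p e) => h.
  have h1 : 0 < 1 + a by lra.
  apply/andP; split; first by apply: divr_gt0.
  by rewrite ltr_pdivrMr // mul1r; lra.
set bp := bernoulli p; set bq := bernoulli q.
have bq_gt0 eta : 0 < bq eta.
  apply: prodr_gt0 => e _; case: (e \in eta); case/andP: (hq e) => // _ h.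
  by rewrite subr_gt0.
have [z0 hz0] := set0Pn _ hSigma.
set Z := \sum_(z in Sigma) bq z.
have Z_gt0 : 0 < Z.
  rewrite /Z (bigD1 z0) //=; have := bq_gt0 z0.
  have : 0 <= \sum_(i in Sigma | i != z0) bq i by apply: sumr_ge0 => i _; apply: ltW.
  lra.
set Px := fun eta : {set E} => \prod_(e in eta) x e.
set SPx := \sum_(z in Sigma) Px z.
have Px_gt0 eta : 0 < Px eta by apply: prodr_gt0.
have SPx_gt0 : 0 < SPx.
  rewrite /SPx (bigD1 z0) //=; have := Px_gt0 z0.
  have : 0 <= \sum_(i in Sigma | i != z0) Px i by apply: sumr_ge0 => i _; apply: ltW.
  lra.
set N := fun eta : {set E} => \prod_(e : E) (if e \in eta then 1 else 1 - p e).
have N_gt0 eta : 0 < N eta by apply: prodr_gt0 => e _; case: ifP.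
set K := \prod_(e : E) ((1 - p e) / (1 + x e * (1 - p e))).
have K_gt0 : 0 < K.
  apply: prodr_gt0 => e _; apply: divr_gt0 => //; have := ha e; lra.
have KPx eta : bq eta * N eta = K * Px eta.
  rewrite /bq /N /bernoulli /K /Px -big_split /= [X in _ * X]big_mkcond -big_split /=.
  apply: eq_bigr => e _; rewrite /q /qpar; have := ha1 e.
  by case: (e \in eta) => h; field.
have jwE w eta : joint_weight p x Sigma w eta =
    if (eta \in Sigma) && (w \subset eta) then bp w * bq eta / Z else 0.
  rewrite /joint_weight /condP /Sigma_up inE -/bq -/Z -/bp.
  by case: (eta \in Sigma); case: (w \subset eta); rewrite /= ?mulr0 ?mulr1 ?mul0r ?mulrA.
have Nsum (eta : {set E}) : \sum_(w : {set E} | w \subset eta) bp w = N eta.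
  rewrite (eq_bigl (fun w => ~: eta :&: w == set0)); last first.
    by move=> w; rewrite setI_eq0 disjoint_sym -subsets_disjoint.
  rewrite (@sum_cap_prod R E (~: eta) set0 (fun e c => if c then p e else 1 - p e)) sub0set.
  apply: eq_bigr => e _; rewrite inE in_set0; case: (e \in eta) => //=; lra.
have col (eta : {set E}) : \sum_(w : {set E}) joint_weight p x Sigma w eta =
    if eta \in Sigma then bq eta / Z * N eta else 0.
  under eq_bigr do rewrite jwE.
  case: (eta \in Sigma) => /=; last by rewrite big1.
  rewrite -big_mkcond /= -Nsum big_distrr /=; apply: eq_bigr => w _.
  by rewrite -mulrA mulrC.
set T := \sum_(w' : {set E}) \sum_(eta' : {set E}) joint_weight p x Sigma w' eta'.
have TE : T = K / Z * SPx.
  rewrite /T exchange_big /=; under eq_bigr do rewrite col.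
  rewrite -big_mkcond /= /SPx big_distrr /=; apply: eq_bigr => eta _.
  by rewrite [RHS]mulrAC -KPx mulrAC.
have T_gt0 : 0 < T by rewrite TE; apply: mulr_gt0 => //; apply: divr_gt0.
have scrPE (w eta : {set E}) : scrP p x Sigma w eta = joint_weight p x Sigma w eta / T by [].
have mS (eta : {set E}) : marg_Sigma p x Sigma eta = (if eta \in Sigma then bq eta / Z * N eta else 0) / T.
  by rewrite /marg_Sigma -col big_distrl.
have row (w : {set E}) : \sum_(eta : {set E}) joint_weight p x Sigma w eta =
    bp w / Z * \sum_(z in Sigma_up Sigma w) bq z.
  rewrite [RHS]big_distrr [RHS]big_mkcond /=; apply: eq_bigr => eta _.
  rewrite jwE /Sigma_up inE; case: ifP => _; last by [].
  by rewrite mulrAC -mulrA.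
have mO (w : {set E}) : marg_Omega p x Sigma w = (bp w / Z * \sum_(z in Sigma_up Sigma w) bq z) / T.
  by rewrite /marg_Omega -row big_distrl.
have NP2 (w a : {set E}) : w \subset a -> N a * \prod_(e : E) (if e \in a then (if e \in w then p e else 1 - p e)
     else p e + (1 - p e)) = bp w.
  move=> hw; rewrite /N /bp /bernoulli -big_split; apply: eq_bigr => e _ /=.
  case ea: (e \in a); first by rewrite mul1r.
  have -> : (e \in w) = false by apply: contraFF ea => /(subsetP hw).
  lra.
split.
  move=> eta; rewrite mS TE -/Px -/SPx; case: ifP => _; last by rewrite !mul0r.
  rewrite [bq eta / Z * N eta]mulrAC KPx -/(Px eta); field; apply/and3P; split; lra.
split.
  move=> w hw eta; move: hw; rewrite mO scrPE /condP jwE /Sigma_up inE => hw.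
  have hbp : bp w != 0 by apply: contraNneq hw => ->; rewrite !mul0r.
  have hs : \sum_(z in [set eta0 in Sigma | w \subset eta0]) bq z != 0.
    by apply: contraNneq hw => ->; rewrite mulr0 mul0r.
  case: ifP => _; last by rewrite !mul0r.
  field; apply/and4P; split => //; lra.
split.
  move=> w; rewrite mO /meas_cap.
  rewrite [RHS](eq_bigr (fun a => marg_Sigma p x Sigma a * \sum_(b | a :&: b == w) bp b)); last first.
    by move=> a _; rewrite big_distrr.
  rewrite big_mkcond big_distrr big_distrl /=; apply: eq_bigr => a _.
  rewrite (@sum_cap_prod R E a w (fun e c => if c then p e else 1 - p e)) /= mS /Sigma_up inE.
  case: (a \in Sigma); case hwa: (w \subset a); rewrite /= ?mulr0 ?mul0r //.
  rewrite -(NP2 w a hwa); field; apply/andP; split; lra.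
move=> eta heta hm w.
have capE : meas_cap bp (@dirac R E eta) w =
    if w \subset eta then \prod_(e : E) (if e \in eta then (if e \in w then p e else 1 - p e)
     else p e + (1 - p e)) else 0.
  rewrite /meas_cap.
  transitivity (\sum_(a : {set E}) if eta :&: a == w then bp a else 0).
    apply: eq_bigr => a _; rewrite big_mkcond (bigD1 eta) //= big1 ?addr0.
      by rewrite /dirac eqxx mulr1 setIC.
    by move=> b hb; rewrite /dirac (negbTE hb) mulr0; case: ifP.
  by rewrite -big_mkcond (@sum_cap_prod R E eta w (fun e c => if c then p e else 1 - p e)).
split; last first.
  rewrite capE /bernoulli_on; case: ifP => // _.
  rewrite [RHS]big_mkcond; apply: eq_bigr => e _; case: ifP => // _; lra.
rewrite capE scrPE mS jwE heta /=; case: ifP => hw; last by rewrite !mul0r.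
rewrite -(NP2 w eta hw); have := N_gt0 eta; have := bq_gt0 eta => h1 h2.
field; apply/and3P; split; lra.
Qed.
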